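(* Let $s$ be a positive integer and $P(z)=1+\sum_{n=1}^s a_nz^n$ with real coefficients $a_n$. Let $r>0$ and suppose $P^{(k)}(-r)\ge 0$ for all $k=0,1,\dots,s$. Then for every $1\le n\le s$, \[ 0\le a_n\le \frac{\binom{s}{n}}{r^n}. \] Moreover, if $a_n=\binom{s}{n}/r^n$ for at least one $n$ with $1\le n\le s$, then $P(z)=\left(1+\frac{z}{r}\right)^s$. *)

(* Defs.v *)
(* Real coefficients are modelled over an arbitrary
   realFieldType R (the statement is purely algebraic). *)
From HB Require Import structures.
From mathcomp Require Import all_boot all_order all_algebra.
Set Implicit Arguments. Unset Strict Implicit. Unset Printing Implicit Defensive.
Import Order.TTheory GRing.Theory Num.Theory.
Local Open Scope ring_scope.

Definition Ppoly (R : realFieldType) (s : nat) (a : nat -> R) : {poly R} :=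
  1 + \sum_(1 <= n < s.+1) a n *: 'X^n.

(* Main.v *)
Require Import Defs.
From HB Require Import structures.
From mathcomp Require Import all_boot all_order all_algebra zify.
Import Order.TTheory GRing.Theory Num.Theory.
Local Open Scope ring_scope.

Lemma coef_Ppoly (R : realFieldType) (s : nat) (a : nat -> R) k :
  (Ppoly s a)`_k = if k == 0%N then 1 else if (k < s.+1)%N then a k else 0.
Proof.
rewrite /Ppoly coefD coef1 coef_sum.
rewrite (eq_bigr (fun j => if j == k then a j else 0)); last first.
  by move=> j _; rewrite coefZ coefXn eq_sym; case: eqP => _; rewrite ?mulr1 ?mulr0.
rewrite -big_mkcond big_nat1_eq /=.
case: k => [|k] //=; first by rewrite addr0.
by rewrite add0r.
Qed.

Lemma Ppoly_size (R : realFieldType) (s : nat) (a : nat -> R) :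
  (size (Ppoly s a) <= s.+1)%N.
Proof.
apply/leq_sizeP => j hj; rewrite coef_Ppoly.
by case: j hj => // j hj; rewrite ltnNge hj.
Qed.

Lemma coef_u (R : fieldType) (t : R) m n :
  ((1 + t *: 'X)^+m)`_n = t^+n *+ 'C(m,n).
Proof.
rewrite addrC exprD1n coef_sum.
rewrite (eq_bigr (fun i : 'I_m.+1 => if (i : nat) == n then t^+n *+ 'C(m,n) else 0)); last first.
  move=> i _; rewrite coefMn exprZn coefZ coefXn eq_sym.
  by case: eqP => [->|_]; rewrite ?mulr1 ?mulr0 ?mul0rn.
rewrite -big_mkcond /= -(big_mkord (fun i => i == n) (fun _ => t ^+ n *+ 'C(m, n))).
rewrite big_nat1_eq /= ltnS; case: leqP => // hmn.
by rewrite bin_small // mulr0n.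
Qed.
Lemma mapC_hornerX (R : comNzRingType) (p : {poly R}) : (p^:P).['X] = p.
Proof.
rewrite horner_coef size_map_polyC.
rewrite (eq_bigr (fun i : 'I_(size p) => p`_i *: 'X^i)); last first.
  by move=> i _; rewrite coef_map /= mul_polyC.
by rewrite -poly_def coefK.
Qed.

Lemma taylorP (R : comNzRingType) (p : {poly R}) n x : (size p <= n)%N ->
  p = \sum_(i < n) (p^`N(i)).[x] *: ('X - x%:P)^+i.
Proof.
move=> hs.
have := @nderiv_taylor_wide _ n (p^:P) (x%:P) ('X - x%:P) (mulrC _ _).
rewrite size_map_polyC => /(_ hs).
rewrite addrC subrK mapC_hornerX => H. rewrite {1}H.
apply: eq_bigr => i _.
by rewrite nderivn_map horner_map /= mul_polyC.
Qed.

Lemma bin_strict (i s n : nat) : (i < s)%N -> (1 <= n <= s)%N -> ('C(i,n) < 'C(s,n))%N.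
Proof.
move: s n => [|s] [|n] //= his hn.
rewrite binS. have := @leq_bin2l i s n.+1. have := bin_gt0 s n. lia.
Qed.

Theorem mainTheorem5 (R : realFieldType) (s : nat) (a : nat -> R) (r : R) :
  (0 < s)%N -> 0 < r ->
  (forall k : nat, (k <= s)%N -> 0 <= ((Ppoly s a)^`(k)).[- r]) ->
  (forall n : nat, (1 <= n <= s)%N ->
      0 <= a n /\ a n <= ('C(s, n))%:R / r ^+ n) /\
  ((exists n : nat, (1 <= n <= s)%N /\ a n = ('C(s, n))%:R / r ^+ n) ->
      Ppoly s a = (1 + r^-1 *: 'X) ^+ s).
Proof.
move=> s0 r0 hder.
set P := Ppoly s a.
pose c i := (P^`N(i)).[-r].
have c0 i : (i <= s)%N -> 0 <= c i.
  move=> /hder; rewrite nderivn_def hornerMn pmulrn_lge0 //; exact: fact_gt0.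
pose u : {poly R} := 1 + r^-1 *: 'X.
have hX : 'X - (-r)%:P = r *: u.
  rewrite polyCN opprK /u scalerDr scalerA mulfV ?gt_eqF // scale1r.
  by rewrite [RHS]addrC alg_polyC.
pose d i := c i * r ^+ i.
have d0 i : (i <= s)%N -> 0 <= d i.
  by move=> his; rewrite mulr_ge0 ?c0 // exprn_ge0 // ltW.
have HP : P = \sum_(i < s.+1) d i *: u ^+ i.
  rewrite {1}(@taylorP R P s.+1 (-r) (Ppoly_size _ s a)).
  by apply: eq_bigr => i _; rewrite hX exprZn scalerA.
pose t := r^-1.
have coefP n : P`_n = \sum_(i < s.+1) d i * (t ^+ n *+ 'C(i, n)).
  by rewrite {1}HP coef_sum; apply: eq_bigr => i _; rewrite coefZ coef_u.
have sum1 : \sum_(i < s.+1) d i = 1.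
  have := coefP 0%N; rewrite /P coef_Ppoly /= => ->.
  by apply: eq_bigr => i _; rewrite expr0 bin0 mulr1n mulr1.
have Kdef n : ('C(s, n))%:R / r ^+ n = \sum_(i < s.+1) d i * (t ^+ n *+ 'C(s, n)).
  by rewrite -big_distrl sum1 /= mul1r /t exprVn mulrC mulr_natr.
have an n : (1 <= n <= s)%N -> a n = P`_n.
  by case/andP=> h1 h2; rewrite /P coef_Ppoly; case: n h1 h2 => [|n] //= _ h2; rewrite ltnS h2.
have tn0 n : 0 < t ^+ n by rewrite exprn_gt0 // invr_gt0.
have term_le n (i : 'I_s.+1) : (1 <= n <= s)%N ->
    d i * (t ^+ n *+ 'C(i, n)) <= d i * (t ^+ n *+ 'C(s, n)).
  move=> hn; have his : (i <= s)%N := ltn_ord i.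
  apply: ler_wpM2l; first exact: d0.
  rewrite -(mulr_natr _ 'C(i, n)) -(mulr_natr _ 'C(s, n)); apply: ler_wpM2l; first exact: ltW.
  by rewrite ler_nat leq_bin2l.
split.
  move=> n hn; rewrite an // coefP; split.
    apply: sumr_ge0 => i _; have his : (i <= s)%N := ltn_ord i.
    rewrite mulr_ge0 ?d0 // mulrn_wge0 // ltW //.
  by rewrite Kdef; apply: ler_sum => i _; apply: term_le.
case=> n [hn heq].
have hz : \sum_(i < s.+1) (d i * (t ^+ n *+ 'C(s, n)) - d i * (t ^+ n *+ 'C(i, n))) = 0.
  by rewrite sumrB -Kdef -coefP -an // heq subrr.
have dz (i : 'I_s.+1) : (i < s)%N -> d i = 0.
  move=> his.
  have hge : forall j : 'I_s.+1, xpredT j ->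
      0 <= d j * (t ^+ n *+ 'C(s, n)) - d j * (t ^+ n *+ 'C(j, n)).
    by move=> j _; rewrite subr_ge0; apply: term_le.
  have /eqP := psumr_eq0P hge hz (i := i) isT.
  rewrite -(mulr_natr _ 'C(i, n)) -(mulr_natr _ 'C(s, n)) -mulrBr mulf_eq0.
  case/orP => [/eqP //|].
  rewrite -mulrBr mulf_eq0 (gt_eqF (tn0 n)) /= subr_eq0 eqr_nat => /eqP hC.
  by have := bin_strict _ _ _ his hn; rewrite hC ltnn.
have dz' (i : 'I_s) : d (widen_ord (leqnSn s) i) = 0.
  exact: (dz (widen_ord (leqnSn s) i) (ltn_ord i)).
have ds : d s = 1.
  move: sum1; rewrite big_ord_recr big1; first by move=> <-; rewrite /= add0r.
  by move=> i _; apply: dz'.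
rewrite -/P HP big_ord_recr big1.
  by rewrite /= add0r ds scale1r.
by move=> i _; rewrite dz' scale0r.
Qed.
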